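(* Let $n$ be even and $F\colon\mathbb F_2^n\to\mathbb F_2^n$ a quadratic APN function with linearity $2^{\frac{n+k}{2}}$, and assume $F$ has a component function with amplitude $2^{\frac{n+\ell}{2}}$ where $2\le\ell<n-k$ and $\ell\ne k$. Then $|N_F|\ge 2^k+2^\ell+1$.
   Context: $\langle\cdot,\cdot\rangle$ is the standard dot product. $F$ is APN if for every $a\ne0$ and $c$, $F(x)+F(x+a)=c$ has at most 2 solutions; quadratic if each component $F_b(x)=\langle b,F(x)\rangle$ is a quadratic form plus an affine function. $W_F(b,a)=\sum_x(-1)^{F_b(x)+\langle x,a\rangle}$; linearity $L(F)=\max_{a,\,b\ne0}|W_F(b,a)|$. For quadratic $F$ and fixed $b$ there is $k'$ with $|W_F(b,a)|\in\{0,2^{(n+k')/2}\}$ for all $a$; $2^{(n+k')/2}$ is the amplitude of $F_b$; $F_b$ is bent if its amplitude is $2^{n/2}$. $N_F=\{b\in\mathbb F_2^n\setminus\{0\}\colon F_b\text{ not bent}\}$. *)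

(* Defs.v *)
From HB Require Import structures.
From mathcomp Require Import all_boot all_order all_algebra.
Set Implicit Arguments. Unset Strict Implicit. Unset Printing Implicit Defensive.
Import Order.TTheory GRing.Theory Num.Theory.
Local Open Scope ring_scope.

Notation vec n := 'rV['F_2]_n.

Definition dot n (x y : vec n) : 'F_2 := \sum_(i < n) x ord0 i * y ord0 i.

Definition comp n (F : vec n -> vec n) (b : vec n) (x : vec n) : 'F_2 :=
  dot b (F x).

Definition APN n (F : vec n -> vec n) : Prop :=
  forall a c : vec n, a != 0 ->
    (#|[set x : vec n | (F x + F (x + a) == c)%R]| <= 2)%N.

Definition quadratic_plus_affine n (f : vec n -> 'F_2) : Prop :=
  exists (A : 'M['F_2]_n) (c : vec n) (d : 'F_2),
    forall x, f x = (x *m A *m x^T) ord0 ord0 + dot c x + d.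

Definition quadratic n (F : vec n -> vec n) : Prop :=
  forall b : vec n, quadratic_plus_affine (comp F b).

Definition sgn (v : 'F_2) : int := if v == 0 then 1 else -1.

Definition walsh n (F : vec n -> vec n) (b a : vec n) : int :=
  \sum_(x : vec n) sgn (comp F b x + dot x a).

Definition linearity n (F : vec n -> vec n) : nat :=
  \max_(b : vec n | b != 0) \max_(a : vec n) `|walsh F b a|%N.

(* amplitude of F_b: the common nonzero value of |W_F(b,a)| (quadratic F),
   i.e. the maximum over a of |W_F(b,a)| *)
Definition amplitude n (F : vec n -> vec n) (b : vec n) : nat :=
  \max_(a : vec n) `|walsh F b a|%N.

(* F_b bent iff amplitude = 2^(n/2), i.e. amplitude^2 = 2^n *)
Definition bent_comp n (F : vec n -> vec n) (b : vec n) : bool :=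
  (amplitude F b ^ 2 == 2 ^ n)%N.

Definition NF n (F : vec n -> vec n) : {set vec n} :=
  [set b | (b != 0) && ~~ bent_comp F b].

(* Main.v *)
Require Import Defs.
From mathcomp Require Import all_boot all_order all_algebra.
From mathcomp Require Import zify.
Set Implicit Arguments. Unset Strict Implicit. Unset Printing Implicit Defensive.
Import Order.TTheory GRing.Theory Num.Theory.
Local Open Scope ring_scope.

Lemma F2_addrr (x : 'F_2) : x + x = 0.
Proof. by case: x => [[|[|]]] //= ?; apply/val_inj. Qed.

Lemma F2_cases (x : 'F_2) : x = 0 \/ x = 1.
Proof. by case: x => [[|[|]]] //= ?; [left|right]; apply/val_inj. Qed.

Lemma sgnD (u v : 'F_2) : sgn (u + v) = sgn u * sgn v.
Proof.
by case: (F2_cases u) => ->; case: (F2_cases v) => ->; rewrite /sgn ?F2_addrr ?addr0 ?add0r.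
Qed.

Lemma sgn0 : sgn 0 = 1. Proof. by []. Qed.
Lemma sgn1 : sgn 1 = -1. Proof. by []. Qed.

Lemma card_sum (T' : finType) (A B : {set T'}) : #|A :&: B| = \sum_(i in A) (i \in B : nat).
Proof.
rewrite -sum1_card (eq_bigl (fun i => (i \in A) && (i \in B))); last by move=> i; rewrite inE.
by rewrite big_mkcondr /=; apply: eq_bigr => i _; case: (i \in B).
Qed.

Lemma leq_sum_sub (I : finType) (P Q : pred I) (F : I -> nat) :
  (forall i, P i -> Q i) -> (\sum_(i | P i) F i <= \sum_(i | Q i) F i)%N.
Proof.
move=> PQ; rewrite [X in (_ <= X)%N](bigID P) /= -[X in (X <= _)%N]addn0 leq_add //.
rewrite (eq_bigl P) // => i; apply/andP/idP => [[]//|Pi]; split => //; exact: PQ.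
Qed.

Section S.
Variable n : nat.
Local Notation T := 'rV['F_2]_n.

Lemma vaddrr (v : T) : v + v = 0.
Proof. by apply/matrixP => i j; rewrite !mxE F2_addrr. Qed.

Lemma vaddKr (x y : T) : x + (x + y) = y.
Proof. by rewrite addrA vaddrr add0r. Qed.

Lemma card_T : #|{: T}| = (2 ^ n)%N.
Proof. by rewrite card_mx card_Fp // mul1n. Qed.

Lemma dotDl (x y z : T) : dot (x + y) z = dot x z + dot y z.
Proof. by rewrite /dot -big_split; apply: eq_bigr => i _; rewrite mxE mulrDl. Qed.
Lemma dotDr (x y z : T) : dot z (x + y) = dot z x + dot z y.
Proof. by rewrite /dot -big_split; apply: eq_bigr => i _; rewrite mxE mulrDr. Qed.
Lemma dotC (x y : T) : dot x y = dot y x.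
Proof. by rewrite /dot; apply: eq_bigr => i _; rewrite mulrC. Qed.
Lemma dot0r (x : T) : dot 0 x = 0.
Proof. by rewrite /dot big1 // => i _; rewrite mxE mul0r. Qed.
Lemma dot0l (x : T) : dot x 0 = 0.
Proof. by rewrite dotC dot0r. Qed.

Lemma dot_delta (i : 'I_n) (v : T) : dot (delta_mx 0 i) v = v 0 i.
Proof.
rewrite /dot (bigD1 i) //= big1 ?addr0 => [|j /negbTE ji]; rewrite mxE.
  by rewrite !eqxx mul1r.
by rewrite ji andbF mul0r.
Qed.

Lemma dot_ext (v : T) : (forall b, dot b v = 0) -> v = 0.
Proof.
move=> H; apply/matrixP => i j; rewrite (ord1 i) -dot_delta H mxE //.
Qed.

Lemma vnz_exists (v : T) : v != 0 -> exists b, dot b v = 1.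
Proof.
move=> nz.
have [j Hj] : exists j, v 0 j != 0.
  apply/existsP; apply: contraR nz => /existsPn H; apply/eqP/matrixP => i j.
  by rewrite (ord1 i) mxE; move/negPn/eqP: (H j).
exists (delta_mx 0 j); rewrite dot_delta; by case: (F2_cases (v 0 j)) Hj => ->.
Qed.

Lemma sum_sgn_set (P : {set T}) (g : T -> 'F_2) :
  (forall u v, u \in P -> v \in P -> u + v \in P) ->
  (forall u v, u \in P -> v \in P -> g (u + v) = g u + g v) ->
  \sum_(u in P) sgn (g u) = if [forall u in P, g u == 0] then (#|P|)%:Z else 0.
Proof.
move=> clP gD; case: ifP => [/forall_inP H | /negbT/forall_inPn [u0 Pu0 gu0]].
  by rewrite (eq_bigr (fun _ => 1)) ?sumr_const ?natz // => u /H/eqP ->.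
have g1 : g u0 = 1 by case: (F2_cases (g u0)) gu0 => ->.
set S := (\sum_(u in P) _).
have HS : S = - S.
  rewrite {1}/S (reindex_inj (addrI u0)) /=.
  rewrite (eq_bigl (fun u => u \in P)) => [|u]; last first.
    apply/idP/idP => [H|H]; last exact: clP.
    by rewrite -(vaddKr u0 u); apply: clP.
  rewrite /S -sumrN; apply: eq_bigr => u Pu.
  by rewrite gD // g1 sgnD sgn1 mulN1r.
lia.
Qed.

Lemma sum_sgn_all (g : T -> 'F_2) :
  (forall u v, g (u + v) = g u + g v) ->
  \sum_u sgn (g u) = if [forall u, g u == 0] then (2 ^ n)%:Z else 0.
Proof.
move=> gD; have := @sum_sgn_set setT g (fun _ _ _ _ => in_setT _) (fun u v _ _ => gD u v).
rewrite cardsT card_T => E.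
have -> : \sum_u sgn (g u) = \sum_(u in setT) sgn (g u) by apply: eq_bigl => u; rewrite in_setT.
rewrite E.
congr (if _ then _ else _); apply/forall_inP/forallP => H u; first exact: H (in_setT u).
by move=> _; exact: H.
Qed.

Lemma sum_sgn_dot (u : T) :
  \sum_a sgn (dot u a) = if u == 0 then (2 ^ n)%:Z else 0.
Proof.
rewrite sum_sgn_all; last by move=> a b; rewrite dotDr.
congr (if _ then _ else _); apply/forallP/eqP => [H|-> a]; last by rewrite dot0r.
apply: dot_ext => b; rewrite dotC; exact/eqP/H.
Qed.

Lemma voppr (v : T) : - v = v.
Proof. by rewrite -[LHS]add0r -(vaddrr v) addrK. Qed.

Lemma vaddr_eq0 (x a : T) : (x + a == 0) = (x == a).
Proof. by rewrite addr_eq0 voppr. Qed.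

Lemma vaddr_eqr (x a : T) : (x + a == a) = (x == 0).
Proof. by rewrite -{2}(add0r a) (inj_eq (addIr a)). Qed.

End S.
Lemma qexpr n (A : 'M['F_2]_n) (c : 'rV['F_2]_n) d (f : 'rV['F_2]_n -> 'F_2)
  (Hf : forall x, f x = (x *m A *m x^T) ord0 ord0 + dot c x + d) x u :
  f (x+u) + f x + f u + f 0 = (x *m A *m u^T) ord0 ord0 + (u *m A *m x^T) ord0 ord0.
Proof.
have aE : forall (M N : 'M['F_2]_1) , (M + N) ord0 ord0 = M ord0 ord0 + N ord0 ord0 by move=> M N; rewrite mxE.
have zE : ((0 : 'rV['F_2]_n) *m A *m (0 : 'rV['F_2]_n)^T) ord0 ord0 = 0 by rewrite mul0mx mul0mx mxE.
rewrite !Hf zE mulmxDl !raddfD /= !mulmxDl !aE dotDr dot0l; clear Hf zE aE.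
move: ((x *m A *m x^T) ord0 ord0) ((x *m A *m u^T) ord0 ord0) ((u *m A *m x^T) ord0 ord0) ((u *m A *m u^T) ord0 ord0) (dot c x) (dot c u) d.
move=> a b e g h i j.
case: (F2_cases a) => ->; case: (F2_cases b) => ->; case: (F2_cases e) => ->;
case: (F2_cases g) => ->; case: (F2_cases h) => ->; case: (F2_cases i) => ->; case: (F2_cases j) => ->; by apply/val_inj.
Qed.

Ltac f2solve :=
  repeat match goal with
  | |- context [?t] =>
      lazymatch t with 0 => fail | 1 => fail | _ + _ => fail | _ => idtac end;
      let H := fresh in case: (F2_cases t) => H; rewrite ?H; clear H
  end; by apply/val_inj.

Ltac f2solveH :=
  repeat match goal with
  | |- context [?t] =>
      lazymatch t with 0 => fail | 1 => fail | _ + _ => fail | _ => idtac end;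
      let H := fresh in case: (F2_cases t) => H; rewrite ?H; clear H
  end; let H := fresh in move=> /eqP H; apply/eqP; move: H; vm_compute; try done.
Lemma f2test (a b c : 'F_2) : a + b + c + a = c + b.
Proof. f2solve. Qed.

Section Quad.
Variable n : nat.
Local Notation T := 'rV['F_2]_n.
Variable F : T -> T.

Definition Bq b x u := Defs.comp F b (x + u) + Defs.comp F b x + Defs.comp F b u + Defs.comp F b 0.
Definition Vs : T -> {set T} := locked (fun b => [set a | [forall x, Bq b x a == 0]]).
Arguments Vs : simpl never.

Lemma Bq_sym b x u : Bq b x u = Bq b u x.
Proof. rewrite /Bq [u + x]addrC; f2solve. Qed.

Lemma Bq_x0 b x : Bq b x 0 = 0.
Proof. rewrite /Bq addr0; f2solve. Qed.

Lemma Bq_dot b x u : Bq b x u = dot b (F (x + u) + F x + F u + F 0).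
Proof. by rewrite /Bq /Defs.comp !dotDr. Qed.

Lemma inVs b a : (a \in Vs b) = [forall x, Bq b x a == 0].
Proof. by rewrite /Vs -lock inE. Qed.

Lemma Vs0 b : 0 \in Vs b.
Proof. by rewrite inVs; apply/forallP => x; rewrite Bq_x0. Qed.

Lemma Vs_zero a : a \in Vs 0.
Proof. by rewrite inVs; apply/forallP => x; rewrite Bq_dot dot0r. Qed.

Hypothesis HQ : quadratic F.

Lemma Bq_addl b x y u : Bq b (x + y) u = Bq b x u + Bq b y u.
Proof.
have [A [c [d Hf]]] := HQ b.
rewrite /Bq !(qexpr Hf) mulmxDl !raddfD /= ?mulmxDl ?mulmxDr.
have aE : forall (M N : 'M['F_2]_1) , (M + N) ord0 ord0 = M ord0 ord0 + N ord0 ord0 by move=> M N; rewrite mxE.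
rewrite !aE; f2solve.
Qed.

Lemma Bq_addr b x u v : Bq b x (u + v) = Bq b x u + Bq b x v.
Proof. by rewrite Bq_sym Bq_addl -!(Bq_sym _ x). Qed.

Lemma Vs_add b u v : u \in Vs b -> v \in Vs b -> u + v \in Vs b.
Proof.
rewrite !inVs => /forallP Hu /forallP Hv; apply/forallP => x.
by rewrite Bq_addr (eqP (Hu x)) (eqP (Hv x)) addr0.
Qed.

Lemma walsh_sq b a : walsh F b a ^+ 2 =
  \sum_u (\sum_x sgn (Bq b x u)) * sgn (Defs.comp F b u + Defs.comp F b 0 + dot u a).
Proof.
rewrite expr2 /walsh mulr_suml.
under eq_bigr => x _.
  rewrite mulr_sumr (reindex_inj (addrI x)) /=.
  under eq_bigr => u _ do rewrite -sgnD.
  over.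
rewrite exchange_big /=; apply: eq_bigr => u _.
rewrite mulr_suml; apply: eq_bigr => x _; rewrite -sgnD; congr sgn.
rewrite /Bq dotDl; f2solve.
Qed.

Lemma sumBq b u : \sum_x sgn (Bq b x u) = if u \in Vs b then (2 ^ n)%:Z else 0.
Proof.
rewrite sum_sgn_all ?inVs // => x y; exact: Bq_addl.
Qed.

Lemma walsh_sq2 b a : walsh F b a ^+ 2 = (2 ^ n)%:Z *
  (if [forall u in Vs b, Defs.comp F b u + Defs.comp F b 0 + dot u a == 0]
   then (#|Vs b|)%:Z else 0).
Proof.
rewrite -sum_sgn_set; first last.
- move=> u v Hu Hv; move: Hv; rewrite inVs => /forallP /(_ u) /eqP.
  rewrite /Bq dotDl; f2solveH.
- exact: Vs_add.
rewrite walsh_sq mulr_sumr [RHS]big_mkcond /=; apply: eq_bigr => u _.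
by rewrite sumBq; case: ifP => _; rewrite ?mul0r.
Qed.

Lemma walsh_sum b : \sum_a walsh F b a ^+ 2 = (2 ^ n)%:Z * (2 ^ n)%:Z.
Proof.
under eq_bigr => a _ do rewrite walsh_sq.
rewrite exchange_big /= (bigD1 0) //= [X in _ + X]big1 ?addr0 => [|u nz].
  under eq_bigr => a _ do rewrite sgnD dot0r sgn0 mulr1 F2_addrr sgn0 mulr1.
  rewrite sumBq Vs0 sumr_const card_T.
by rewrite -mulr_natr natz.
under eq_bigr => a _ do rewrite sgnD mulrA.
by rewrite -mulr_sumr sum_sgn_dot (negbTE nz) mulr0.
Qed.

Lemma walsh_exists b : exists a, walsh F b a != 0.
Proof.
case: (boolP [exists a, walsh F b a != 0]) => [/existsP // | /existsPn H]; exfalso.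
have : \sum_a walsh F b a ^+ 2 = 0.
  by rewrite big1 // => a _; move/negPn/eqP: (H a) => ->; rewrite expr0n.
rewrite walsh_sum => /eqP; rewrite mulf_eq0 orbb.
by rewrite -natz pnatr_eq0 expn_eq0.
Qed.

Lemma amp_sq b : (amplitude F b ^ 2 = 2 ^ n * #|Vs b|)%N.
Proof.
have key a : (`|walsh F b a| ^ 2 == 0)%N || (`|walsh F b a| ^ 2 == 2 ^ n * #|Vs b|)%N.
  have := congr1 absz (walsh_sq2 b a); rewrite abszX => ->.
  by case: ifP => _; [rewrite -PoszM absz_nat eqxx orbT | rewrite mulr0].
have [a0 nz] := walsh_exists b.
have k0 : (`|walsh F b a0| ^ 2 = 2 ^ n * #|Vs b|)%N.
  move: (key a0); rewrite expn_eq0 andbT absz_eq0 (negbTE nz) /=; exact/eqP.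
have -> : amplitude F b = `|walsh F b a0|%N.
  apply/eqP; rewrite eqn_leq; apply/andP; split; last exact: (leq_bigmax a0).
  apply/bigmax_leqP => a _; rewrite -leq_sqr k0.
  by case/orP: (key a) => /eqP ->.
exact: k0.
Qed.

Hypothesis HA : APN F.

Lemma apn_kernel a : a != 0 -> #|[set x | F (x + a) + F x + F a + F 0 == 0]| = 2.
Proof.
move=> nz.
have -> : [set x | F (x + a) + F x + F a + F 0 == 0] = [set 0; a].
  apply/setP => x; rewrite !inE; apply/idP/idP; last first.
    case/orP => /eqP ->; apply/eqP.
      by rewrite add0r; apply/matrixP => i j; rewrite !mxE; f2solve.
    by rewrite vaddrr; apply/matrixP => i j; rewrite !mxE; f2solve.
  move=> /eqP D; apply/negPn/negP; rewrite negb_or => /andP [x0 xa].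
  have := HA (F 0 + F (0 + a)) nz.
  set Sol := [set z | _].
  have sub : 0 |: (a |: (x |: [set x + a])) \subset Sol.
    apply/subsetP => z; rewrite !inE => /or4P [] /eqP ->.
    - by [].
    - by rewrite vaddrr add0r addrC.
    - apply/eqP/matrixP => i j; move/matrixP: D => /(_ i j); rewrite !mxE add0r; f2solveH.
    - rewrite -addrA vaddrr addr0; apply/eqP/matrixP => i j; move/matrixP: D => /(_ i j).
      rewrite !mxE add0r; f2solveH.
  move/subset_leq_card: sub; rewrite !cardsU1 cards1 !inE.
  have e1 : (0 == a) = false by rewrite eq_sym (negbTE nz).
  have e2 : (0 == x) = false by rewrite eq_sym (negbTE x0).
  have e3 : (0 == x + a) = false by rewrite eq_sym vaddr_eq0 (negbTE xa).
  have e4 : (a == x) = false by rewrite eq_sym (negbTE xa).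
  have e5 : (a == x + a) = false by rewrite eq_sym vaddr_eqr (negbTE x0).
  have e6 : (x != x + a) by rewrite -{1}(addr0 x) (inj_eq (addrI x)) eq_sym.
  rewrite e1 e2 e3 e4 e5 e6 /=.
  by move=> H1 H2; have := leq_trans H1 H2.
by rewrite cards2 eq_sym nz.
Qed.

Lemma apn_count a : a != 0 -> #|[set b | a \in Vs b]| = 2.
Proof.
move=> nz.
have E1 : \sum_b \sum_x sgn (Bq b x a) = (2 ^ n)%:Z * (#|[set b | a \in Vs b]|)%:Z.
  under eq_bigr => b _ do rewrite sumBq.
  rewrite -big_mkcond /= (eq_bigl (fun b => b \in [set b | a \in Vs b])); last by move=> b; rewrite inE.
  by rewrite sumr_const -mulr_natr natz.
have E2 : \sum_b \sum_x sgn (Bq b x a) = (2 ^ n)%:Z * (#|[set x | F (x + a) + F x + F a + F 0 == 0]|)%:Z.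
  rewrite exchange_big /=.
  under eq_bigr => x _.
    under eq_bigr => b _ do rewrite Bq_dot.
    rewrite sum_sgn_all; last by move=> u v; rewrite dotDl.
    over.
  rewrite -big_mkcond /=.
  rewrite (eq_bigl (fun x => x \in [set x | F (x + a) + F x + F a + F 0 == 0])); last first.
    move=> x; rewrite inE; apply/forallP/eqP => [H|-> b]; last by rewrite dot0l.
    by apply: dot_ext => b; apply/eqP.
  by rewrite sumr_const -mulr_natr natz.
move: E2; rewrite E1 (apn_kernel nz) => /eqP; rewrite -!PoszM eqz_nat eqn_mul2l expn_eq0 /=.
by move/eqP.
Qed.

Lemma apn_unique a b b' : a != 0 -> b != 0 -> b' != 0 ->
  a \in Vs b -> a \in Vs b' -> b = b'.
Proof.
move=> nz bnz b'nz ab ab'; apply/eqP; apply: contraT => ne.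
have := apn_count nz.
have sub : 0 |: (b |: [set b']) \subset [set b | a \in Vs b].
  apply/subsetP => z; rewrite !inE => /or3P [] /eqP ->; rewrite ?Vs_zero //.
move/subset_leq_card: sub; rewrite !cardsU1 cards1 !inE (eq_sym 0 b) (negbTE bnz).
by rewrite (eq_sym 0 b') (negbTE b'nz) (negbTE ne) /= => H E; rewrite E in H.
Qed.

Lemma apn_exists a : a != 0 -> exists2 b, b != 0 & a \in Vs b.
Proof.
move=> nz; have := apn_count nz.
case: (pickP (fun b => (b != 0) && (a \in Vs b))) => [b /andP [] | H]; first by exists b.
have sub : [set b | a \in Vs b] \subset [set 0].
  apply/subsetP => b; rewrite !inE => ab; move: (H b); rewrite ab andbT.
  by move/negbFE.
by move/subset_leq_card: sub; rewrite cards1 => /[swap] ->.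
Qed.

Lemma part_sum (Y : {set T}) : 0 \notin Y ->
  (\sum_(b | b != 0%R) #|Vs b :&: Y|)%N = #|Y|.
Proof.
move=> Y0.
under eq_bigr => b _ do rewrite setIC card_sum.
rewrite exchange_big /= -sum1_card; apply: eq_bigr => y Yy.
have ynz : y != 0 by apply: contraNneq Y0 => <-.
have [b bnz yb] := apn_exists ynz.
rewrite (bigD1 b) //= yb big1 // => b' /andP [b'nz ne].
case: (boolP (y \in Vs b')) => // yb'.
by rewrite (apn_unique ynz b'nz bnz yb' yb) eqxx in ne.
Qed.

Lemma comb b0 b1 : b0 != 0 -> b1 != 0 -> b0 != b1 ->
  (#|Vs b1| * #|Vs b0| < 2 ^ n)%N -> (1 < #|Vs b1|)%N -> (1 < #|Vs b0|)%N ->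
  (#|Vs b1| + #|Vs b0| + 1 <= #|[set b | (b != 0%R) && (1 < #|Vs b|)%N]|)%N.
Proof.
move=> b0nz b1nz ne cardlt U1 W1.
set U := Vs b1; set W := Vs b0.
have UW u : u \in U -> u \in W -> u = 0.
  move=> uU uW; apply/eqP; apply: contraTT ne => unz; rewrite negbK; apply/eqP.
  exact: (apn_unique unz b0nz b1nz uW uU).
pose S := [set p.1 + p.2 | p in setX U W].
have SU u : u \in U -> u \in S.
  by move=> uU; apply/imsetP; exists (u, 0); rewrite ?inE /= ?uU ?Vs0 ?addr0.
have SW w : w \in W -> w \in S.
  by move=> wW; apply/imsetP; exists (0, w); rewrite ?inE /= ?wW ?Vs0 ?add0r.
have S0 : 0 \in S by apply: SU; exact: Vs0.
have Sadd z z' : z \in S -> z' \in S -> z + z' \in S.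
  case/imsetP => [[u w]] /setXP [/= uU wW] ->.
  case/imsetP => [[u' w']] /setXP [/= uU' wW'] ->.
  apply/imsetP; exists (u + u', w + w'); first by rewrite inE /= !Vs_add.
  by rewrite /= addrACA.
have cardS : #|S| = (#|U| * #|W|)%N.
  rewrite card_in_imset ?cardsX // => [[u w]] [u' w'] /setXP [/= uU wW] /setXP [/= uU' wW'] /= E.
  have E2 : u + u' = w + w'.
    by apply/matrixP => i j; move/matrixP: E => /(_ i j); rewrite !mxE; f2solveH.
  have h1 : u + u' = 0 by apply: UW; [exact: Vs_add | rewrite E2; exact: Vs_add].
  have h2 : w + w' = 0 by rewrite -E2.
  by move/eqP: h1; move/eqP: h2; rewrite !vaddr_eq0 => /eqP -> /eqP ->.
have [x0 x0S] : exists x0, x0 \notin S.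
  apply/existsP; apply: contraT => /existsPn H.
  have : [set: T] \subset S by apply/subsetP => x _; move/negPn: (H x).
  move/subset_leq_card; rewrite cardsT card_T cardS => H2.
  by move: (leq_ltn_trans H2 cardlt); rewrite ltnn.
pose E := (fun y => x0 + y) @^-1: S.
have inE' y : (y \in E) = (x0 + y \in S) by rewrite inE.
have cardE : #|E| = #|S| by rewrite card_preimset //; exact: addrI.
have E0 : 0 \notin E by rewrite inE' addr0.
pose c' b := #|Vs b :&: (S :\ 0)|.
have cS b : #|Vs b :&: S| = (c' b).+1.
  rewrite (cardsD1 0) inE Vs0 S0 /= add1n; congr (#|_|).+1.
  by rewrite setIDA.
pose e b := #|Vs b :&: E|.
have eE b : (0 < e b)%N -> e b = #|Vs b :&: S|.
  move=> /card_gt0P [y0 /setIP [y0V y0E]].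
  rewrite inE' in y0E.
  rewrite /e; apply/eqP; rewrite eqn_leq; apply/andP; split.
    rewrite -(card_imset (Vs b :&: E) (addIr y0)); apply: subset_leq_card; apply/subsetP => z.
    case/imsetP => y /setIP [yV yE] ->; rewrite inE' in yE.
    rewrite inE Vs_add //=.
    have -> : y + y0 = (x0 + y) + (x0 + y0).
      by apply/matrixP => i j; rewrite !mxE; f2solve.
    exact: Sadd.
  rewrite -(card_imset (Vs b :&: S) (addIr y0)); apply: subset_leq_card; apply/subsetP => z.
  case/imsetP => y /setIP [yV yS] ->.
  rewrite inE Vs_add //= inE'.
  have -> : x0 + (y + y0) = y + (x0 + y0).
    by apply/matrixP => i j; rewrite !mxE; f2solve.
  exact: Sadd.
have e0 b : Vs b \subset S -> e b = 0%N.
  move=> /subsetP sub; apply/eqP; rewrite cards_eq0; apply/eqP/setP => y.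
  rewrite !inE; apply/negP => /andP [yV yE].
  move: x0S; have -> : x0 = (x0 + y) + y by rewrite -addrA vaddrr addr0.
  by rewrite Sadd // sub.
have US : U \subset S by apply/subsetP => u; exact: SU.
have WS : W \subset S by apply/subsetP => u; exact: SW.
have eb1 : e b1 = 0%N by exact: e0.
have eb0 : e b0 = 0%N by exact: e0.
have cb1 : c' b1 = (#|U|).-1 by have := cS b1; rewrite (setIidPl US) => ->.
have cb0 : c' b0 = (#|W|).-1 by have := cS b0; rewrite (setIidPl WS) => ->.
pose M := [set b | (b != 0) && (0 < e b)%N].
have key1 : #|S| = (\sum_(b in M) c' b + #|M|)%N.
  rewrite -cardE -part_sum //.
  rewrite [LHS](bigID (fun b => 0 < e b)%N) /= [X in (_ + X)%N]big1 ?addn0; last first.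
    by move=> b /andP [_]; rewrite lt0n negbK => /eqP.
  rewrite -sum1_card -big_split /=.
  apply: eq_big => [b|b]; first by rewrite inE.
  by move=> /andP [_ /eE H]; rewrite /e in H; rewrite H cS addn1.
have b0M : b0 \notin M by rewrite inE eb0 ltnn andbF.
have b1M : b1 \notin b0 |: M by rewrite !inE eb1 ltnn andbF orbF eq_sym.
have key2 : (\sum_(b in b1 |: (b0 |: M)) c' b <= #|S| - 1)%N.
  have -> : (#|S| - 1 = #|S :\ 0%R|)%N by rewrite (cardsD1 0 S) S0 add1n subn1.
  rewrite -part_sum; last by rewrite !inE eqxx.
  apply: leq_sum_sub => b; rewrite !inE => /orP [/eqP -> //| /orP [/eqP -> // | /andP []//]].
rewrite !big_setU1 //= cb1 cb0 in key2.
have sub : b1 |: (b0 |: M) \subset [set b | (b != 0) && (1 < #|Vs b|)%N].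
  apply/subsetP => b; rewrite !inE => /orP [/eqP -> | /orP [/eqP -> | /andP [bnz eb]]].
  - by rewrite b1nz.
  - by rewrite b0nz.
  rewrite bnz /=.
  have : 0 |: (Vs b :&: E) \subset Vs b.
    by apply/subsetP => z; rewrite !inE => /orP [/eqP -> | /andP []//]; exact: Vs0.
  move/subset_leq_card; rewrite cardsU1 inE (negbTE E0) andbF add1n.
  by apply: leq_trans.
move/subset_leq_card: sub; rewrite !cardsU1 b1M b0M /= => H.
apply: leq_trans H.
move: key1 key2; rewrite cardS.
have [cM ->] : exists cM : nat, (\sum_(b in M) c' b)%N = cM by eexists.
move: #|U| #|W| U1 W1 => u w U1' W1'.
move=> k1 k2.
move: (u * w)%N k1 k2 => P k1 k2; set m := #|M| in k1 *; clearbody m; lia.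
Qed.

End Quad.

Theorem mainTheorem9 (n k l : nat) (F : 'rV['F_2]_n -> 'rV['F_2]_n) :
  ~~ odd n ->
  quadratic F -> APN F ->
  (linearity F ^ 2 = 2 ^ (n + k))%N ->
  (exists b : 'rV['F_2]_n, (b != 0)%R /\ (amplitude F b ^ 2 = 2 ^ (n + l))%N) ->
  (2 <= l)%N -> (l < n - k)%N -> l <> k ->
  (2 ^ k + 2 ^ l + 1 <= #|NF F|)%N.
Proof.
move=> _ HQ HA Hlin [b0 [b0nz Hb0]] l2 lnk lk.
have V0 : #|Vs F b0| = (2 ^ l)%N.
  apply/eqP; rewrite -(eqn_pmul2l (expn_gt0 2 n)) -expnD -Hb0 (amp_sq HQ) //.
have A0 : (0 < #|(fun b : 'rV['F_2]_n => b != 0%R)|)%N by apply/card_gt0P; exists b0.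
have [b1 b1nz Hl] := @eq_bigmax_cond _ (fun b : 'rV['F_2]_n => b != 0) (amplitude F) A0.
have HL : linearity F = amplitude F b1 by exact: Hl.
have V1 : #|Vs F b1| = (2 ^ k)%N.
  apply/eqP; rewrite -(eqn_pmul2l (expn_gt0 2 n)) -expnD -Hlin HL (amp_sq HQ) //.
have lek : (l <= k)%N.
  have : (amplitude F b0 <= linearity F)%N by rewrite HL -Hl; apply: leq_bigmax_cond; exact: b0nz.
  rewrite -leq_sqr Hb0 Hlin leq_exp2l // leq_add2l //.
have ne : b0 != b1.
  apply/eqP => E; apply: lk; apply/eqP; rewrite -(eqn_exp2l _ _ (isT : 1 < 2)%N) -V0 -V1 E //.
have pos : forall m, (2 <= m)%N -> (1 < 2 ^ m)%N.
  by move=> m hm; rewrite -{1}(expn0 2) ltn_exp2l // (leq_trans _ hm).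
have := comb HQ HA b0nz b1nz ne.
rewrite V0 V1 -expnD => H.
have lt1 : (2 ^ (k + l) < 2 ^ n)%N by rewrite ltn_exp2l //; lia.
have kk : (2 <= k)%N by exact: leq_trans l2 lek.
move: (H lt1 (pos k kk) (pos l l2)).
have -> : [set b | (b != 0%R) && (1 < #|Vs F b|)%N] = NF F.
  apply/setP => b; rewrite !inE /bent_comp (amp_sq HQ b).
  rewrite -{2}(muln1 (2 ^ n)%N) eqn_pmul2l ?expn_gt0 //.
  have : (0 < #|Vs F b|)%N by apply/card_gt0P; exists 0; exact: Vs0.
  by case: #|Vs F b| => [|[|m]].
by [].
Qed.
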